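(* Let $T$ be a finite rooted tree with a vertex coloring, and suppose that all orbits of $\mathrm{Aut}(T)$ on the set of leaves of $T$ have the same size. Then there exists a vertex-colored graph $H_T$ containing $T$ (with its coloring) as an induced subgraph such that $V(T)$ is invariant under $\mathrm{Aut}(H_T)$, the action of $\mathrm{Aut}(H_T)$ on $V(T)$ is faithful, the action of $\mathrm{Aut}(H_T)$ on the set of leaves of $T$ is semiregular, and the orbits of $\mathrm{Aut}(H_T)$ on $V(T)$ are exactly the orbits of $\mathrm{Aut}(T)$ on $V(T)$.
   Context: For a vertex-colored graph or tree, automorphisms are required to preserve vertex colors (and, for the rooted tree $T$, the tree structure); $\mathrm{Aut}(\cdot)$ denotes the group of such automorphisms. A leaf orbit of $T$ is an orbit of $\mathrm{Aut}(T)$ on the set of leaves. The action of a group on a set is faithful if only the identity acts trivially, and semiregular if every point stabilizer is trivial (only the identity fixes any given point). *)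

(* Defs.v *)
From mathcomp Require Import all_boot all_fingroup.
Set Implicit Arguments. Unset Strict Implicit. Unset Printing Implicit Defensive.

Definition is_rooted_tree (T : finType) (r : T) (p : T -> T) : Prop :=
  p r = r /\ forall x : T, exists n : nat, iter n p x = r.

Definition tadj (T : finType) (p : T -> T) : rel T :=
  fun x y => (x != y) && ((p x == y) || (p y == x)).

Definition tleaf (T : finType) (r : T) (p : T -> T) (x : T) : bool :=
  [forall y, (y != r) ==> (p y != x)].

Definition is_autT (T : finType) (C : eqType) (r : T) (p : T -> T)
  (col : T -> C) (s : {perm T}) : bool :=
  [&& s r == r,
      [forall x, forall y, tadj p (s x) (s y) == tadj p x y] &
      [forall x, col (s x) == col x]].

Definition AutT (T : finType) (C : eqType) (r : T) (p : T -> T)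
  (col : T -> C) : {set {perm T}} := [set s | is_autT r p col s].

Definition orbitT (T : finType) (C : eqType) (r : T) (p : T -> T)
  (col : T -> C) (x : T) : {set T} := [set (s : {perm T}) x | s in AutT r p col].

Definition is_autG (W : finType) (D : eqType) (e : rel W) (col : W -> D)
  (s : {perm W}) : bool :=
  [forall x, forall y, e (s x) (s y) == e x y] && [forall x, col (s x) == col x].

(* Main.v *)
Require Import Defs.
From mathcomp Require Import all_boot all_fingroup.
Set Implicit Arguments. Unset Strict Implicit. Unset Printing Implicit Defensive.

Section Tree.
Variables (T : finType) (C : eqType) (r : T) (p : T -> T) (col : T -> C).
Hypothesis tree : is_rooted_tree r p.

Local Notation A := (AutT r p col).
Local Notation O := (orbitT r p col).
Implicit Types s t : {perm T}.
Local Open Scope group_scope.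

Lemma pr : p r = r. Proof. by case: tree. Qed.
Lemma iter_r n : iter n p r = r. Proof. exact: iter_fix pr. Qed.

Lemma cyc_r x m : iter m.+1 p x = x -> x = r.
Proof.
case: tree => _ /(_ x) [N HN] Hm.
have H k : iter (k * m.+1) p x = x.
  by elim: k => // k IH; rewrite mulSn iterD IH Hm.
by rewrite -(H N) mulnS addnC iterD HN iter_r.
Qed.

Lemma inA s : s \in A ->
  [/\ s r = r, forall x y, tadj p (s x) (s y) = tadj p x y & forall x, col (s x) = col x].
Proof.
rewrite inE => /and3P[/eqP h1 /forallP h2 /forallP h3]; split => // [x y|x].
  exact/eqP/(forallP (h2 x)).
exact/eqP.
Qed.

Lemma mkA s : s r = r -> (forall x, s (p x) = p (s x)) ->
  (forall x, col (s x) = col x) -> s \in A.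
Proof.
move=> h1 h2 h3; rewrite inE; apply/and3P; split; first exact/eqP.
  apply/forallP=> x; apply/forallP=> y; apply/eqP.
  by rewrite /tadj (inj_eq perm_inj) -!h2 !(inj_eq perm_inj).
by apply/forallP=> x; apply/eqP.
Qed.

Lemma A_group : group_set A.
Proof.
apply/group_setP; split.
  rewrite inE; apply/and3P; split; first by rewrite perm1.
    by apply/forallP=> x; apply/forallP=> y; rewrite !perm1.
  by apply/forallP=> x; rewrite perm1.
move=> s t /inA[s1 s2 s3] /inA[t1 t2 t3].
rewrite inE; apply/and3P; split; first by rewrite permM s1 t1.
  by apply/forallP=> x; apply/forallP=> y; rewrite !permM t2 s2.
by apply/forallP=> x; rewrite permM t3 s3.
Qed.

Canonical AG := Group A_group.

Lemma A_comm s : s \in A -> forall x, s (p x) = p (s x).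
Proof.
move=> /inA[s1 s2 s3] x.
case: tree => _ /(_ x) [n]; elim: n x => [|n IH] x.
  by move=> /= ->; rewrite pr s1 pr.
move=> Hn.
have [->|xr] := eqVneq x r; first by rewrite pr s1 pr.
have pxx : p x != x by apply: contra_neq xr => h; apply: (@cyc_r x 0).
have : tadj p x (p x) by rewrite /tadj eq_sym pxx eqxx.
rewrite -s2 /tadj => /andP[_ /orP[/eqP //|/eqP h]].
have IH' := IH (p x); rewrite iterSr in Hn; rewrite -IH' // in h.
move/perm_inj: h => h.
by move: xr; rewrite (@cyc_r x 1) ?eqxx //= h.
Qed.

Lemma A_iter s n x : s \in A -> iter n p (s x) = s (iter n p x).
Proof. by move=> sA; elim: n => //= n ->; rewrite (A_comm sA). Qed.

Lemma A_r s x : s \in A -> (s x == r) = (x == r).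
Proof. by move=> /inA[s1 _ _]; rewrite -{1}s1 (inj_eq perm_inj). Qed.

Lemma OP x y : reflect (exists2 s, s \in A & y = s x) (y \in O x).
Proof. by rewrite /orbitT; apply: (iffP imsetP). Qed.

Lemma porbit_O s x : s \in A -> porbit s x \subset O x.
Proof.
move=> sA; apply/subsetP=> y /porbitP[i ->]; apply/OP; exists (s ^+ i)%g => //.
exact: groupX.
Qed.


Lemma A_fixr s : s \in A -> s r = r. Proof. by case/inA. Qed.
Lemma A_col s x : s \in A -> col (s x) = col x. Proof. by case/inA=> _ _ ->. Qed.

Definition sub a z := fconnect p z a.

Lemma subP a z : reflect (exists n, iter n p z = a) (sub a z).
Proof.
apply: (iffP idP) => [/iter_findex h|[n <-]]; last exact: fconnect_iter.
by eexists; exact: h.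
Qed.

Definition L d := [set z | (iter d.+1 p z == r) && (iter d p z != r)].

Lemma L_iter d a b k : a \in L d -> b \in L d -> iter k p a = b -> k = 0.
Proof.
rewrite !inE => /andP[/eqP ha _] /andP[_ hb]; case: k => // k hk.
move: hb; rewrite -hk -iterD addnS -addSn addnC iterD ha iter_r eqxx.
by [].
Qed.

Lemma L_A d s z : s \in A -> (s z \in L d) = (z \in L d).
Proof. by move=> sA; rewrite !inE !A_iter // !A_r. Qed.

Lemma low_notsub d x z : x \in L d -> iter d p z = r -> ~~ sub x z.
Proof.
rewrite inE => /andP[_ hx] hz; apply/negP => /subP[n hn].
by move: hx; rewrite -hn -iterD addnC iterD hz iter_r eqxx.
Qed.

Lemma notsubL d a w : a \in L d -> w \in L d -> w != a -> ~~ sub a w.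
Proof.
move=> aL wL; apply: contra => /subP[n hn].
have h0 := L_iter wL aL hn; move: hn; rewrite h0 /= => ->; exact: eqxx.
Qed.

Lemma swap d x y t : x \in L d -> y \in L d -> x != y -> p x = p y ->
  t \in A -> t x = y ->
  exists2 tau, tau \in A & [/\ tau x = y, tau y = x,
    (forall w, w \in L d -> w != x -> w != y -> tau w = w) &
    (forall w, iter d p w = r -> tau w = w)].
Proof.
move=> xL yL xy pxy tA txy.
have tiA : t^-1 \in A by rewrite groupV.
have tiy : t^-1 y = x by rewrite -txy permK.
have sx_sy z : sub x z -> sub y (t z).
  by move/subP=> [n hn]; apply/subP; exists n; rewrite A_iter // hn.
have sy_sx z : sub y z -> sub x (t^-1 z).
  by move/subP=> [n hn]; apply/subP; exists n; rewrite A_iter // hn.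
have disj z : sub x z -> sub y z -> False.
  move=> /subP[n hn] /subP[m hm].
  case: (leqP n m) => [le|lt].
    have : iter (m - n) p x = y by rewrite -hn -iterD subnK.
    move=> h; have h0 := L_iter xL yL h; rewrite h0 /= in h.
    by move: xy; rewrite h eqxx.
  have : iter (n - m) p y = x by rewrite -hm -iterD subnK // ltnW.
  move=> h; have h0 := L_iter yL xL h; rewrite h0 /= in h.
  by move: xy; rewrite h eqxx.
pose f z := if sub x z then t z else if sub y z then t^-1 z else z.
have finv : involutive f.
  move=> z; have [hx|hx] := boolP (sub x z).
    have e1 : f z = t z by rewrite /f hx.
    have hy := sx_sy _ hx.
    have hx' : sub x (t z) = false by apply/negP => h; exact: disj _ h hy.
    by rewrite e1 /f hx' hy permK.
  have [hy|hy] := boolP (sub y z).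
    have e1 : f z = t^-1 z by rewrite /f (negbTE hx) hy.
    by rewrite e1 /f (sy_sx _ hy) permKV.
  have e1 : f z = z by rewrite /f (negbTE hx) (negbTE hy).
  by rewrite e1 e1.
pose tau := perm (can_inj finv).
have tauE z : tau z = f z by rewrite permE.
have u_low : iter d p (p x) = r.
  by move: xL; rewrite inE -iterSr => /andP[/eqP].
have nsxu : ~~ sub x (p x) := low_notsub xL u_low.
have nsyu : ~~ sub y (p x) := low_notsub yL u_low.
have sxx : sub x x by apply/subP; exists 0.
have syy : sub y y by apply/subP; exists 0.
have nsxy : ~~ sub x y by apply: (notsubL xL yL); rewrite eq_sym.
have sub_p a z : sub a z -> z != a -> sub a (p z).
  move=> /subP[[|n] hn] za; first by move: za; rewrite -hn eqxx.
  by apply/subP; exists n; rewrite -iterSr.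
have sub_p' a z : sub a (p z) -> sub a z.
  by move=> /subP[n hn]; apply/subP; exists n.+1; rewrite iterSr.
exists tau.
  apply: mkA.
  - rewrite tauE /f.
    rewrite (negbTE (low_notsub xL (iter_r d))) (negbTE (low_notsub yL (iter_r d))).
    by [].
  - move=> z; rewrite !tauE /f.
    have [hx|hx] := boolP (sub x z).
      have [zx|zx] := eqVneq z x.
        by rewrite zx (negbTE nsxu) (negbTE nsyu) txy pxy.
      by rewrite (sub_p _ _ hx zx) (A_comm tA).
    rewrite /=.
    have [hy|hy] := boolP (sub y z).
      have [zy|zy] := eqVneq z y.
        by rewrite zy -pxy (negbTE nsxu) (negbTE nsyu) /= tiy pxy.
      have hpy := sub_p _ _ hy zy.
      have hpx : sub x (p z) = false.
        by apply/negP => h; apply: (disj _ h hpy).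
      by rewrite hpx hpy /= (A_comm tiA).
    have -> : sub x (p z) = false by apply/negP => /sub_p'; rewrite (negbTE hx).
    have -> : sub y (p z) = false by apply/negP => /sub_p'; rewrite (negbTE hy).
    by [].
  - move=> z; rewrite tauE /f.
    by case: ifP => _; [rewrite A_col | case: ifP => _ //; rewrite A_col].
split.
- by rewrite tauE /f sxx.
- by rewrite tauE /f (negbTE nsxy) syy.
- move=> w wL wx wy; rewrite tauE /f.
  by rewrite (negbTE (notsubL xL wL wx)) (negbTE (notsubL yL wL wy)).
- move=> w hw; rewrite tauE /f.
  by rewrite (negbTE (low_notsub xL hw)) (negbTE (low_notsub yL hw)).
Qed.


Definition Cl d s := [forall x, (iter d p x == r) ==> (O x \subset porbit s x)].

Lemma NL d s : s \in A -> s \in 'N(L d | 'P).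
Proof. by move=> sA; apply/astabsP => z; rewrite /= /aperm L_A. Qed.

Lemma step d : (exists2 s, s \in A & Cl d s) -> exists2 s, s \in A & Cl d.+1 s.
Proof.
move=> [s0 s0A s0C].
pose P s := (s \in A) && Cl d s.
pose M s := #|porbits (restr_perm (L d) s)|.
have P0 : P s0 by apply/andP.
case: (arg_minnP M P0) => sm /andP[smA smC] smin.
exists sm => //.
apply/forallP => x; apply/implyP => hx.
have [hxd|hxd] := boolP (iter d p x == r); first exact: (implyP (forallP smC x)).
have xL : x \in L d by rewrite inE hx hxd.
apply/subsetP => y yO.
apply/negPn/negP => yN.
have uC : O (p x) \subset porbit sm (p x).
  by apply: (implyP (forallP smC (p x))); rewrite -iterSr.
case/OP: yO => t tA ty.
have : p y \in O (p x) by apply/OP; exists t => //; rewrite ty (A_comm tA).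
move/(subsetP uC)/porbitP => [j hj].
pose g := sm ^+ j.
have gA : g \in A by rewrite groupX.
pose y' := g^-1 y.
pose t' := t * g^-1.
have t'A : t' \in A by rewrite groupM ?groupV.
have t'x : t' x = y' by rewrite permM -ty.
have py' : p y' = p x.
  by rewrite /y' -(A_comm (groupVr gA)) hj permK.
have y'L : y' \in L d by rewrite -t'x L_A.
have y'N : y' \notin porbit sm x.
  apply: contra yN => /porbitP[i hi]; apply/porbitP; exists (i + j).
  by rewrite expgD permM -hi /y' permKV.
have xy' : x != y'.
  by apply: contraNneq y'N => <-; exact: porbit_id.
have [tau tauA [tx ty' tL tlow]] := swap xL y'L xy' (esym py') t'A t'x.
pose s2 := tau * sm.
have s2A : s2 \in A by rewrite groupM.
have low i w : iter d p w = r -> (s2 ^+ i) w = (sm ^+ i) w.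
  move=> hw; elim: i => // i IH.
  rewrite !expgSr !permM IH tlow //.
  by rewrite A_iter ?groupX // hw A_fixr ?groupX.
have Ps2 : P s2.
  apply/andP; split => //; apply/forallP => w; apply/implyP => /eqP hw.
  apply: (subset_trans (implyP (forallP smC w) (introT eqP hw))).
  apply/subsetP => z /porbitP[i ->]; rewrite -low //; exact: mem_porbit.
have le := smin s2 Ps2.
pose rho := restr_perm (L d) sm.
have xLd : forall z, z \notin L d -> (x != z) && (y' != z).
  by move=> z zL; apply/andP; split; apply: contraNneq zL => <-.
have Er : restr_perm (L d) s2 = tperm x y' * rho.
  apply/permP => z; rewrite permM.
  have [zL|zL] := boolP (z \in L d).
    have tzL : tperm x y' z \in L d by case: tpermP => _; rewrite ?xL ?y'L ?zL.
    rewrite !restr_permE ?NL // permM.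
    congr (sm _).
    case: tpermP => [->|->|zx zy] //.
    by apply: tL => //; apply/eqP.
  have /andP[nx ny] := xLd z zL.
  rewrite tpermD //.
  by rewrite !(out_perm (restr_perm_on _ _)).
have rhoX i w : w \in L d -> (rho ^+ i) w = (sm ^+ i) w.
  move=> wL; elim: i => // i IH.
  by rewrite !expgSr !permM IH restr_permE ?NL // L_A ?groupX.
have xN : x \notin porbit rho y'.
  apply: contra y'N => /porbitP[i hi]; rewrite porbit_sym; apply/porbitP.
  by exists i; rewrite hi rhoX.
have := porbits_mul_tperm rho x y'.
rewrite /= xN xy' -Er.
move: le; rewrite /M /=.
move=> le h.
have : #|porbits (restr_perm (L d) s2)| < #|porbits (restr_perm (L d) sm)|.
  by rewrite -(ltn_add2r 1) addn1 -h addn2.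
by rewrite ltnNge le.
Qed.

Lemma Cl_all : exists2 s, s \in A & forall x, O x \subset porbit s x.
Proof.
have H d : exists2 s, s \in A & Cl d s.
  elim: d => [|d IH]; last exact: step.
  exists 1; first exact: group1.
  apply/forallP => x; apply/implyP => /= /eqP ->.
  apply/subsetP => y /OP[s sA ->]; rewrite A_fixr //; exact: porbit_id.
have hx x : exists n, iter n p x == r.
  by case: tree => _ /(_ x) [n hn]; exists n; apply/eqP.
pose D := \max_(x : T) xchoose (hx x).
case: (H D) => s sA sC; exists s => // x.
apply: (implyP (forallP sC x)).
have le := leq_bigmax (F := fun x => xchoose (hx x)) x.
by rewrite /D -(subnK le) iterD (eqP (xchooseP (hx x))) iter_r.
Qed.


Lemma leaf_below v : exists2 l, tleaf r p l & sub v l.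
Proof.
pose Dz z := [set w | sub z w].
have P0 : sub v v by apply/subP; exists 0.
case: (arg_minnP (fun z => #|Dz z|) P0) => z vz zmin.
exists z => //.
apply/forallP => c; apply/implyP => cr; apply/negP => /eqP pcz.
have vc : sub v c by move/subP: vz => [n hn]; apply/subP; exists n.+1; rewrite iterSr pcz.
have := zmin c vc; apply/negP; rewrite -ltnNge; apply: proper_card.
rewrite properE; apply/andP; split.
  apply/subsetP => w; rewrite !inE => /subP[n hn]; apply/subP; exists n.+1.
  by rewrite iterS hn.
apply/subsetP => /(_ z); rewrite !inE.
have -> : sub z z by apply/subP; exists 0.
move=> /(_ isT) /subP[n hn].
move: cr; rewrite (@cyc_r c n) ?eqxx //.
by rewrite iterSr pcz.
Qed.

Lemma porbit_fix s x i : (s ^+ i) x = x -> forall y,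
  #|porbit s y| = #|porbit s x| -> (s ^+ i) y = y.
Proof.
move=> hi y hy; set n := #|porbit s x| in hy.
have npos : 0 < n by rewrite lt0n card_porbit_neq0.
have hk z k : (s ^+ (k * #|porbit s z|)) z = z.
  by rewrite mulnC expgM permX_fix // permX iter_porbit.
have split_i z : (s ^+ i) z = (s ^+ (i %% n)) ((s ^+ (i %/ n * n)) z).
  by rewrite {1}(divn_eq i n) expgD permM.
have hm : (s ^+ (i %% n)) x = x by rewrite -{2}hi split_i hk.
have m0 : i %% n = 0.
  have lt : i %% n < n by rewrite ltn_mod.
  have U := uniq_traject_porbit s x.
  have := nth_uniq x (s := traject s x n) (i := 0) (j := i %% n).
  rewrite size_traject npos lt => /(_ isT isT U).
  rewrite !nth_traject //= -permX hm eqxx.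
  by move/esym/eqP.
by rewrite split_i m0 expg0 perm1 -hy hk.
Qed.

Lemma semireg sg : sg \in A -> (forall x, O x \subset porbit sg x) ->
  (forall x y, tleaf r p x -> tleaf r p y -> #|O x| = #|O y|) ->
  forall a, a \in <[sg]> -> forall l, tleaf r p l -> a l = l -> a = 1.
Proof.
move=> sgA hO heq a /cycleP[i ->] l hl al.
have cardP x : #|porbit sg x| = #|O x|.
  by apply/eqP; rewrite eqn_leq !subset_leq_card ?porbit_O ?hO.
have hleaves l' : tleaf r p l' -> (sg ^+ i) l' = l'.
  by move=> hl'; apply: (porbit_fix al); rewrite !cardP; apply: heq.
apply/permP => v; rewrite perm1.
have [l' hl' /subP[n <-]] := leaf_below v.
by rewrite -A_iter ?groupX // hleaves.
Qed.


Lemma cycA sg : sg \in A -> forall g, g \in <[sg]> -> g \in A.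
Proof. by move=> sgA g /cycleP[i ->]; rewrite groupX. Qed.

End Tree.

Section HGraph.
Variables (T : finType) (C : eqType) (r : T) (p : T -> T) (col : T -> C).
Variable G : {group {perm T}}.
Hypothesis GA : forall g, g \in G -> g \in AutT r p col.
Local Open Scope group_scope.

Definition GT := {g : {perm T} | g \in G}.
Local Notation W := (T + (GT + GT * T))%type.
Definition DH := (C + (unit + T))%type.

Definition eH : rel W := fun a b => match a, b with
 | inl x, inl y => tadj p x y
 | inr (inl g), inr (inr (h, v)) => g == h
 | inr (inr (h, v)), inr (inl g) => g == h
 | inl x, inr (inr (h, v)) => x == v
 | inr (inr (h, v)), inl x => x == v
 | _, _ => false end.

Definition cH (w : W) : DH := match w with
 | inl x => inl (col x)
 | inr (inl g) => inr (inl tt)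
 | inr (inr (g, v)) => inr (inr ((val g)^-1 v)) end.

Lemma eH_sym : symmetric eH.
Proof.
move=> [x|[g|[g v]]] [y|[h|[h w]]] //=; rewrite ?(eq_sym g) ?(eq_sym x) //.
by rewrite /tadj eq_sym orbC.
Qed.

Lemma eH_irr : irreflexive eH.
Proof. by move=> [x|[g|[g v]]] //=; rewrite /tadj eqxx. Qed.


Lemma HG1 a : a \in G -> exists2 phi : {perm W}, is_autG eH cH phi &
  forall v, phi (inl v) = inl (a v).
Proof.
move=> aG.
have [a1 a2 a3] := inA (GA aG).
pose mG (g : GT) : GT := exist _ (val g * a) (groupM (valP g) aG).
have mG_inj : injective mG.
  move=> g h /(congr1 val) /= /mulIg; exact: val_inj.
pose F (w : W) : W := match w with
  | inl v => inl (a v)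
  | inr (inl g) => inr (inl (mG g))
  | inr (inr (g, v)) => inr (inr (mG g, a v)) end.
have F_inj : injective F.
  move=> [x|[g|[g v]]] [y|[h|[h w]]] //= [].
  - by move/perm_inj ->.
  - by move/mulIg/val_inj ->.
  - by move/mulIg/val_inj -> => /perm_inj ->.
pose phi := perm F_inj.
exists phi; last by move=> v; rewrite permE.
apply/andP; split.
  apply/forallP => x; apply/forallP => y; apply/eqP; rewrite !permE.
  case: x => [x|[g|[g v]]]; case: y => [y|[h|[h w]]] //=;
    by rewrite ?a2 ?(inj_eq mG_inj) ?(inj_eq perm_inj).
apply/forallP => x; apply/eqP; rewrite permE.
case: x => [x|[g|[g v]]] //=; first by rewrite a3.
by rewrite invMg permM permK.
Qed.

Lemma HG2 (phi : {perm W}) : is_autG eH cH phi ->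
  exists2 a, a \in G & (forall v, phi (inl v) = inl (a v)) /\ (a = 1 -> phi = 1).
Proof.
case/andP => /forallP he0 /forallP hc0.
have he x y : eH (phi x) (phi y) = eH x y by apply/eqP/(forallP (he0 x)).
have hc x : cH (phi x) = cH x by apply/eqP.
have hV v : {w | phi (inl v) = inl w}.
  case E: (phi (inl v)) => [w|[g|[g w]]]; first by exists w.
    by have := hc (inl v); rewrite E.
  by have := hc (inl v); rewrite E.
have hG g : {h : GT | phi (inr (inl g)) = inr (inl h)}.
  case E: (phi (inr (inl g))) => [w|[h|[h w]]]; last 2 first.
  - by exists h.
  - by have := hc (inr (inl g)); rewrite E.
  by have := hc (inr (inl g)); rewrite E.
pose psi v := sval (hV v).
pose pi g := sval (hG g).
have psiE v : phi (inl v) = inl (psi v) := svalP (hV v).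
have piE g : phi (inr (inl g)) = inr (inl (pi g)) := svalP (hG g).
have hP g v : phi (inr (inr (g, v))) = inr (inr (pi g, psi v)) /\
   (val (pi g))^-1 (psi v) = (val g)^-1 v.
  have e1 := he (inr (inl g)) (inr (inr (g, v))).
  have e2 := he (inl v) (inr (inr (g, v))).
  have c1 := hc (inr (inr (g, v))).
  rewrite piE /= eqxx in e1; rewrite psiE /= eqxx in e2.
  move: e1 e2 c1; case: (phi (inr (inr (g, v)))) => [w|[h|[h w]]] //=.
  by move=> /eqP <- /eqP <- [].
pose g1 : GT := exist _ 1 (group1 G).
pose a := val (pi g1).
have aG : a \in G := valP (pi g1).
have psia v : psi v = a v.
  have [_ h] := hP g1 v; rewrite /= invg1 perm1 in h.
  by rewrite -{2}h /a permKV.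
exists a => //; split; first by move=> v; rewrite psiE psia.
move=> a1; apply/permP => w; rewrite perm1.
have psi1 v : psi v = v by rewrite psia a1 perm1.
have pi1 g : pi g = g.
  apply: val_inj; apply: invg_inj; apply/permP => v.
  by have [_ h] := hP g v; rewrite psi1 in h.
case: w => [v|[g|[g v]]].
- by rewrite psiE psi1.
- by rewrite piE pi1.
- by have [-> _] := hP g v; rewrite pi1 psi1.
Qed.

End HGraph.

Theorem theorem2 (T : finType) (C : eqType) (r : T) (p : T -> T) (col : T -> C) :
  is_rooted_tree r p ->
  (forall x y : T, tleaf r p x -> tleaf r p y ->
     #|orbitT r p col x| = #|orbitT r p col y|) ->
  exists (W : finType) (D : eqType) (e : rel W) (colH : W -> D)
         (f : T -> W) (iota : C -> D),
    [/\ symmetric e, irreflexive e, injective f & injective iota] /\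
        (* T with its colouring is an induced subgraph of H via f *)
        (forall x y : T, e (f x) (f y) = tadj p x y) /\
        (forall x : T, colH (f x) = iota (col x)) /\
    [/\ (* V(T) is Aut(H)-invariant *)
        (forall s : {perm W}, is_autG e colH s -> forall x : T, s (f x) \in codom f),
        (* faithful on V(T) *)
        (forall s : {perm W}, is_autG e colH s ->
           (forall x : T, s (f x) = f x) -> s = 1%g),
        (* semiregular on the leaves of T *)
        (forall s : {perm W}, is_autG e colH s ->
           forall x : T, tleaf r p x -> s (f x) = f x -> s = 1%g) &
        (* orbits of Aut(H) on V(T) = orbits of Aut(T) *)
        (forall x y : T,
           (exists2 s : {perm W}, is_autG e colH s & s (f x) = f y) <->
           (exists2 t : {perm T}, is_autT r p col t & t x = y))].
Proof.
move=> tree heq.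
have [sg sgA hO] := @Cl_all T C r p col tree.
pose G := <[sg]>%G.
have GA : forall g, g \in G -> g \in AutT r p col by exact: cycA.
exists (T + (GT G + GT G * T))%type, (DH T C), (eH p (G:=G)), (cH col (G:=G)), inl, inl.
split; first by split; [exact: eH_sym | exact: eH_irr | move=> ? ? [] | move=> ? ? []].
split; first by [].
split; first by [].
split.
- move=> s hs x; have [a aG [ha _]] := HG2 hs; by rewrite ha codom_f.
- move=> s hs hfix; have [a aG [ha h1]] := HG2 hs; apply: h1.
  by apply/permP => v; rewrite perm1; have := hfix v; rewrite ha => -[].
- move=> s hs x hx hsx; have [a aG [ha h1]] := HG2 hs; apply: h1.
  apply: (semireg tree sgA hO heq aG hx).
  by move: hsx; rewrite ha => -[].
- move=> x y; split.
    move=> [s hs hsx]; have [a aG [ha _]] := HG2 hs.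
    exists a; first by have := GA _ aG; rewrite inE.
    by move: hsx; rewrite ha => -[].
  move=> [t ht htx].
  have : y \in orbitT r p col x by apply/imsetP; exists t; rewrite ?inE.
  move/(subsetP (hO x))/porbitP => [i hi].
  have [phi hphi phiE] := HG1 GA (mem_cycle sg i).
  by exists phi => //; rewrite phiE hi.
Qed.
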